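(* Let $q=p^e$ with $p$ a prime and $e\ge1$, let $r\ge2$, $m=2r$, and assume $(q,r)\ne(2,2)$. Let $D=\{x\in\mathbb{F}_{q^m}:\mathrm{Tr}_{q^r/q}(x^{q^r+1})=0\}$ and $\overline{\mathcal{C}_D}=\{(\mathrm{Tr}_{q^m/q}(bx)+c)_{x\in D}: b\in\mathbb{F}_{q^m},\ c\in\mathbb{F}_q\}$. Then $\overline{\mathcal{C}_D}$ is self-orthogonal, i.e. $\overline{\mathcal{C}_D}\subseteq\overline{\mathcal{C}_D}^{\perp}$.
   Context: $\mathrm{Tr}_{q^k/q}$ is the trace map from $\mathbb{F}_{q^k}$ to $\mathbb{F}_q$; the dual is with respect to the standard inner product on $\mathbb{F}_q^{|D|}$. *)

(* Defs.v *)
From mathcomp Require Import all_boot all_order all_algebra all_field.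
Set Implicit Arguments. Unset Strict Implicit. Unset Printing Implicit Defensive.
Import GRing.Theory.
Local Open Scope ring_scope.

(* Trace from F_{q^n} to F_q, computed inside a finite field K containing
   F_{q^n}: Tr_{q^n/q}(y) = sum_{i<n} y^(q^i). *)
Definition trace (K : finFieldType) (q n : nat) (y : K) : K :=
  \sum_(i < n) y ^+ (q ^ i).

Definition in_Fq (K : finFieldType) (q : nat) (c : K) : bool := c ^+ q == c.

Definition Dset (K : finFieldType) (q r : nat) : {set K} :=
  [set x : K | trace q r (x ^+ (q ^ r + 1)) == 0].

(* The codeword (Tr_{q^m/q}(b x) + c)_{x in D}, as a function on K
   (only its values on D matter). *)
Definition codeword (K : finFieldType) (q m : nat) (b c : K) : K -> K :=
  fun x => trace q m (b * x) + c.

Definition in_code (K : finFieldType) (q m : nat) (u : K -> K) : Prop :=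
  exists b c : K, in_Fq q c /\ u = codeword q m b c.

Definition innerD (K : finFieldType) (D : {set K}) (u v : K -> K) : K :=
  \sum_(x in D) u x * v x.

Definition self_orthogonal (K : finFieldType) (q m : nat) (D : {set K}) : Prop :=
  forall u v : K -> K, in_code q m u -> in_code q m v -> innerD D u v = 0.

(* Main.v *)
Require Import Defs.
From mathcomp Require Import all_boot all_order all_algebra all_field all_solvable.
From mathcomp Require Import zify.
Import GRing.Theory.


Lemma qpow_bound (q r a : nat) : (1 < q)%N -> (a < r)%N -> (q ^ a * q <= q ^ r)%N.
Proof. move=> q1 ar; rewrite -expnSr leq_exp2l //. Qed.

Lemma ndiv_small (q r a b : nat) : (1 < q)%N -> (a < r)%N -> (b < r)%N ->
  ~~ (q ^ r + 1 %| q ^ a + q ^ b)%N.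
Proof.
move=> q1 ar br; have ha := @qpow_bound q r a q1 ar; have hb := @qpow_bound q r b q1 br.
have A1 : (0 < q ^ a)%N by rewrite expn_gt0; lia.
have B1 : (0 < q ^ b)%N by rewrite expn_gt0; lia.
apply/negP=> /dvdnP [k Hk].
move: ha hb A1 B1 Hk; set A := q ^ a; set B := q ^ b; set R := q ^ r => ha hb A1 B1 Hk.
have hA2 : (2 * A <= R)%N by nia.
have hB2 : (2 * B <= R)%N by nia.
case: k Hk => [|k] Hk; nia.
Qed.

Lemma div_mixed (q r a b : nat) : (1 < q)%N -> (a < r)%N -> (b < r)%N ->
  (q ^ r + 1 %| q ^ a + q ^ b * q ^ r)%N -> a = b.
Proof.
move=> q1 ar br; have ha := @qpow_bound q r a q1 ar; have hb := @qpow_bound q r b q1 br.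
have A1 : (0 < q ^ a)%N by rewrite expn_gt0; lia.
have B1 : (0 < q ^ b)%N by rewrite expn_gt0; lia.
move=> /dvdnP [k Hk]; apply: (expnI q1).
move: ha hb A1 B1 Hk; set A := q ^ a; set B := q ^ b; set R := q ^ r => ha hb A1 B1 Hk.
have hA2 : (A <= R)%N by nia.
have hB2 : (B <= R)%N by nia.
have kB : k = B.
  case: (ltngtP k B) => h //.
  - have : ((k + 1) * (R + 1) <= B * (R + 1))%N by apply: leq_mul; lia.
    nia.
  - have : ((B + 1) * (R + 1) <= k * (R + 1))%N by apply: leq_mul; lia.
    nia.
subst k; nia.
Qed.

Lemma div_case (q r i j : nat) : (1 < q)%N -> (i < 2 * r)%N -> (j < 2 * r)%N ->
  (q ^ r + 1 %| q ^ i + q ^ j)%N -> j = (i + r)%N \/ i = (j + r)%N.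
Proof.
move=> q1 ir jr.
have cop : coprime (q ^ r + 1) (q ^ r) by rewrite addn1 coprimeSn.
case: (ltnP i r) => hi; case: (ltnP j r) => hj.
- by move/negP: (@ndiv_small q r _ _ q1 hi hj).
- have -> : (q ^ j = q ^ (j - r) * q ^ r)%N by rewrite -expnD subnK.
  move=> H; have := @div_mixed q r i (j - r) q1 hi (_ : j - r < r)%N H.
  move=> E; left; rewrite E ?subnK //; lia.
- have -> : (q ^ i = q ^ (i - r) * q ^ r)%N by rewrite -expnD subnK.
  rewrite [(_ + q ^ j)%N]addnC => H; have := @div_mixed q r j (i - r) q1 hj (_ : i - r < r)%N H.
  move=> E; right; rewrite E ?subnK //; lia.
- have -> : (q ^ i + q ^ j = q ^ r * (q ^ (i - r) + q ^ (j - r)))%N.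
    by rewrite mulnDr -!expnD !subnKC.
  rewrite Gauss_dvdr //.
  have := @ndiv_small q r _ _ q1 (_ : i - r < r)%N (_ : j - r < r)%N.
  move=> H; rewrite (negPf (H _ _)) //; lia.
Qed.

Local Open Scope ring_scope.

Lemma pnat_pow (K : finFieldType) (q i : nat) : [pchar K].-nat q -> [pchar K].-nat (q ^ i)%N.
Proof. by move=> hq; rewrite pnatX hq. Qed.

Lemma frob_sum (K : finFieldType) (N : nat) (I : finType) (P : pred I) (F : I -> K) :
  [pchar K].-nat N -> (\sum_(i | P i) F i) ^+ N = \sum_(i | P i) F i ^+ N.
Proof.
move=> hN; have N0 : (0 < N)%N by case/andP: hN.
apply: (big_morph (fun y : K => y ^+ N)) => [x y|]; first exact: exprDn_pchar.
by rewrite expr0n; case: N N0 {hN}.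
Qed.

Lemma sum_inv (K : finFieldType) (A : {set K}) (l : K) (k : nat) :
  l != 0 -> (forall x, (l * x \in A) = (x \in A)) -> l ^+ k != 1 ->
  \sum_(x in A) x ^+ k = 0.
Proof.
move=> l0 hA hk.
have E : \sum_(x in A) x ^+ k = l ^+ k * \sum_(x in A) x ^+ k.
  rewrite {1}(reindex_inj (mulfI l0)) /= mulr_sumr.
  by apply: eq_big => [x|x _]; [rewrite hA | rewrite exprMn].
move/eqP: E; rewrite -subr_eq0 -{1}[\sum_(x in A) _]mul1r -mulrBl mulf_eq0.
by rewrite subr_eq0 eq_sym (negPf hk) /= => /eqP.
Qed.

Lemma exists_prim (K : finFieldType) : exists g : K, (#|K|.-1).-primitive_root g.
Proof.
have K0 : (0 < #|K|.-1)%N by rewrite -ltnS prednK ?finNzRing_gt1 // (ltn_trans _ (finNzRing_gt1 _)).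
set rs := enum (predC1 (0 : K)).
have H1 : all (#|K|.-1).-unity_root rs.
  apply/allP => x; rewrite mem_enum inE => x0; rewrite unity_rootE.
  apply/eqP; apply: (mulfI x0); rewrite mulr1 -exprS prednK ?expf_card //.
  exact: (ltn_trans _ (finNzRing_gt1 _)).
have H3 : (#|K|.-1 <= size rs)%N by rewrite -cardE cardC1.
have := @has_prim_root K #|K|.-1 rs K0 H1 (enum_uniq _) H3.
by case/hasP => g _ Hg; exists g.
Qed.

Lemma sumK_zero (K : finFieldType) (k : nat) : ~~ (#|K|.-1 %| k)%N -> \sum_(x : K) x ^+ k = 0.
Proof.
move=> hk; have [g Hg] := exists_prim K.
have K0 : (0 < #|K|.-1)%N by rewrite -ltnS prednK ?finNzRing_gt1 // (ltn_trans _ (finNzRing_gt1 _)).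
have g0 : g != 0.
  apply/eqP => g0; have := prim_expr_order Hg; rewrite g0 expr0n.
  by case: (#|K|.-1) K0 => // n _ /eqP; rewrite eq_sym oner_eq0.
have -> : \sum_(x : K) x ^+ k = \sum_(x in [set: K]) x ^+ k by apply: eq_bigl => x; rewrite inE.
apply: (@sum_inv K [set: K] g k g0) => [x|]; first by rewrite !inE.
by rewrite -(prim_order_dvd Hg).
Qed.

Lemma tr_fix (K : finFieldType) (q r : nat) (x : K) : [pchar K].-nat q -> (0 < r)%N ->
  #|K| = (q ^ (2 * r))%N ->
  (trace q r (x ^+ (q ^ r + 1))) ^+ q = trace q r (x ^+ (q ^ r + 1)).
Proof.
move=> hq r0 hK; rewrite /trace (@frob_sum K q) //.
case: r r0 hK => // r' _ hK.
rewrite big_ord_recr big_ord_recl /= expn0 expr1 addrC.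
congr (_ + _).
  rewrite -!exprM -expnSr mulnDl mul1n exprD -expnD addnn -mul2n -hK expf_card.
  by rewrite exprD expr1 mulrC.
by apply: eq_bigr => i _; rewrite -exprM /bump /= add1n [(q ^ i.+1)%N]expnSr.
Qed.

Lemma indic (K : finFieldType) (q : nat) (t : K) : (1 < q)%N -> t ^+ q = t ->
  (if t == 0 then 1 else 0) = 1 - t ^+ q.-1.
Proof.
move=> q1 ht; case: eqP => [->|/eqP t0].
  by rewrite expr0n; case: q q1 ht => [|[|q']] //= _ _; rewrite subr0.
suff -> : t ^+ q.-1 = 1 by rewrite subrr.
by apply: (mulfI t0); rewrite -exprS prednK ?ht ?mulr1 //; lia.
Qed.

Lemma Dsum (K : finFieldType) (q r : nat) (f : K -> K) : [pchar K].-nat q -> (1 < q)%N ->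
  (0 < r)%N -> #|K| = (q ^ (2 * r))%N ->
  \sum_(x in Dset K q r) f x =
  \sum_(x : K) (1 - (trace q r (x ^+ (q ^ r + 1))) ^+ q.-1) * f x.
Proof.
move=> hq q1 r0 hK; rewrite big_mkcond; apply: eq_bigr => x _.
rewrite inE -(@indic K q) ?(@tr_fix K q r) //.
by case: eqP => _; rewrite ?mul1r ?mul0r.
Qed.

Lemma expand (K : finFieldType) (q r n j s : nat) : (0 < q)%N -> (0 < r)%N ->
  exists es : seq nat,
    all (fun e => (s + j <= e)%N && (e <= s + j * q ^ r.-1)%N) es /\
    forall x : K, (trace q r (x ^+ n)) ^+ j * x ^+ (n * s) = \sum_(e <- es) x ^+ (n * e).
Proof.
move=> q0 r0; elim: j => [|j [es [Hb He]]].
  exists [:: s]; split; first by rewrite /= mul0n !addn0 leqnn.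
  by move=> x; rewrite expr0 mul1r big_seq1.
exists [seq (e + q ^ a)%N | e <- es, a <- iota 0 r]; split.
  apply/allP => e' /allpairsP [[e a] /= [He' Ha ->]].
  have /andP[h1 h2] := allP Hb e He'; rewrite mem_iota in Ha.
  have qa1 : (1 <= q ^ a)%N by rewrite expn_gt0 q0.
  have qa2 : (q ^ a <= q ^ r.-1)%N by rewrite leq_pexp2l //; lia.
  rewrite mulSn; lia.
move=> x; rewrite exprS -mulrA He /trace big_allpairs_dep /= mulr_sumr.
apply: eq_bigr => e _; rewrite mulr_suml.
have -> : iota 0 r = index_iota 0 r by rewrite /index_iota subn0.
rewrite big_mkord.
by apply: eq_bigr => a _; rewrite -!exprM -exprD mulnDr addnC.
Qed.

Lemma sumK_poly (K : finFieldType) (q r n j s : nat) : (0 < q)%N -> (0 < r)%N -> (0 < n)%N ->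
  #|K|.-1 = (n * (q ^ r - 1))%N -> (0 < s + j)%N -> (s + j * q ^ r.-1 < q ^ r - 1)%N ->
  \sum_(x : K) (trace q r (x ^+ n)) ^+ j * x ^+ (n * s) = 0.
Proof.
move=> q0 r0 n0 hM h1 h2.
have [es [Hb He]] := @expand K q r n j s q0 r0.
under eq_bigr => x _ do rewrite He.
rewrite exchange_big /=; apply: big1_seq => e /andP[_ He'].
apply: sumK_zero; rewrite hM dvdn_pmul2l //.
have /andP[h3 h4] := allP Hb e He'.
apply/negP => /dvdn_leq; lia.
Qed.

Lemma D_zero (K : finFieldType) (q r k : nat) : (1 < q)%N -> (0 < r)%N ->
  #|K| = (q ^ (2 * r))%N -> ~~ (q ^ r + 1 %| k)%N ->
  \sum_(x in Dset K q r) x ^+ k = 0.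
Proof.
move=> q1 r0 hK hk; have [g Hg] := exists_prim K.
have hn : (q ^ r + 1 %| #|K|.-1)%N.
  rewrite hK mul2n -addnn expnD; apply/dvdnP; exists (q ^ r - 1)%N.
  have : (1 <= q ^ r)%N by rewrite expn_gt0; lia.
  set R := (q ^ r)%N; nia.
have Hl := dvdn_prim_root Hg hn.
set l := g ^+ _ in Hl.
have l0 : l != 0.
  apply/eqP => l0; have := prim_expr_order Hl; rewrite l0 expr0n addn1 /=.
  by move/eqP; rewrite eq_sym oner_eq0.
apply: (@sum_inv K (Dset K q r) l k l0) => [x|]; first by rewrite !inE exprMn prim_expr_order // mul1r.
by rewrite -(prim_order_dvd Hl).
Qed.

Lemma Qbig (q r : nat) : (1 < q)%N -> (1 < r)%N -> ((q, r) <> (2%N, 2%N)) -> (2 < q ^ r.-1)%N.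
Proof.
move=> q1 r1 hne; case: r r1 hne => [|[|[|r']]] //= _ hne.
  by rewrite expn1; case: q q1 hne => [|[|[|q']]].
have : (q ^ 2 <= q ^ r'.+2)%N by rewrite leq_pexp2l //; lia.
rewrite expnS expn1; nia.
Qed.

Lemma hMlem (K : finFieldType) (q r : nat) : (0 < q)%N -> #|K| = (q ^ (2 * r))%N ->
  #|K|.-1 = ((q ^ r + 1) * (q ^ r - 1))%N.
Proof.
move=> q0 hK; rewrite hK mul2n -addnn expnD.
have : (1 <= q ^ r)%N by rewrite expn_gt0 q0.
set R := (q ^ r)%N; nia.
Qed.

Lemma SN (K : finFieldType) (q r : nat) : [pchar K].-nat q -> (1 < q)%N -> (1 < r)%N ->
  ((q, r) <> (2%N, 2%N)) -> #|K| = (q ^ (2 * r))%N ->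
  \sum_(x in Dset K q r) x ^+ (q ^ r + 1) = 0.
Proof.
move=> hq q1 r1 hne hK; rewrite (@Dsum K q r) //; last lia.
under eq_bigr => x _ do rewrite mulrBl mul1r.
rewrite sumrB.
have hQ := @Qbig q r q1 r1 hne.
have qr : (q ^ r = q * q ^ r.-1)%N by rewrite -expnS prednK //; lia.
have c1 : (1 + 0 * q ^ r.-1 < q ^ r - 1)%N by rewrite qr; nia.
have c2 : (1 + q.-1 * q ^ r.-1 < q ^ r - 1)%N by rewrite qr; nia.
have E1 := @sumK_poly K q r (q ^ r + 1) 0 1 (ltnW q1) (ltnW r1) (ltn_addl _ (ltnSn 0)) (@hMlem K q r (ltnW q1) hK) isT c1.
have E2 := @sumK_poly K q r (q ^ r + 1) q.-1 1 (ltnW q1) (ltnW r1) (ltn_addl _ (ltnSn 0)) (@hMlem K q r (ltnW q1) hK) (ltn_addr _ (ltnSn 0)) c2.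
rewrite muln1 in E1 E2.
rewrite (eq_bigr _ (fun x _ => mul1r _)) in E1.
by rewrite E1 E2 subr0.
Qed.

Lemma Dcard (K : finFieldType) (p q r : nat) : p \in [pchar K] -> (p %| q)%N -> [pchar K].-nat q -> (1 < q)%N -> (1 < r)%N ->
  #|K| = (q ^ (2 * r))%N -> (#|Dset K q r|%:R : K) = 0.
Proof.
move=> pK pq hq q1 r1 hK.
have -> : (#|Dset K q r|%:R : K) = \sum_(x in Dset K q r) (1 : K) by rewrite sumr_const.
rewrite (@Dsum K q r) //; last lia.
under eq_bigr => x _ do rewrite mulr1.
rewrite sumrB.
have hQ : (q ^ 1 <= q ^ r.-1)%N by rewrite leq_pexp2l //; lia.
rewrite expn1 in hQ.
have qr : (q ^ r = q * q ^ r.-1)%N by rewrite -expnS prednK //; lia.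
have c2 : (0 + q.-1 * q ^ r.-1 < q ^ r - 1)%N by rewrite qr; nia.
have c3 : (0 < 0 + q.-1)%N by lia.
have E2 := @sumK_poly K q r (q ^ r + 1) q.-1 0 (ltnW q1) (ltnW r1) (ltn_addl _ (ltnSn 0)) (@hMlem K q r (ltnW q1) hK) c3 c2.
rewrite muln0 in E2.
have -> : \sum_(x : K) trace q r (x ^+ (q ^ r + 1)) ^+ q.-1 =
          \sum_(x : K) trace q r (x ^+ (q ^ r + 1)) ^+ q.-1 * x ^+ 0.
  by apply: eq_bigr => x _; rewrite expr0 mulr1.
rewrite E2 subr0 sumr_const.
apply/eqP; rewrite -(dvdn_pcharf pK) hK; apply: dvdn_exp => //; lia.
Qed.



Lemma Btr (K : finFieldType) (q r : nat) (b : K) : (1 < q)%N -> (0 < r)%N ->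
  #|K| = (q ^ (2 * r))%N ->
  \sum_(x in Dset K q r) trace q (2 * r) (b * x) = 0.
Proof.
move=> q1 r0 hK; rewrite /trace exchange_big /=; apply: big1 => i _.
under eq_bigr => x _ do rewrite exprMn.
rewrite -mulr_sumr (@D_zero K q r) ?mulr0 //.
have cop : coprime (q ^ r + 1) q by rewrite -(coprime_pexpr _ _ r0) addn1 coprimeSn.
apply/negP => H; have := Gauss_dvdr 1 (coprimeXr i cop); rewrite muln1 H.
move/esym/dvdn_leq => /(_ isT); have : (0 < q ^ r)%N by rewrite expn_gt0; lia.
lia.
Qed.

Lemma Ctr (K : finFieldType) (q r : nat) (b b' : K) : [pchar K].-nat q -> (1 < q)%N -> (1 < r)%N ->
  ((q, r) <> (2%N, 2%N)) -> #|K| = (q ^ (2 * r))%N ->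
  \sum_(x in Dset K q r) trace q (2 * r) (b * x) * trace q (2 * r) (b' * x) = 0.
Proof.
move=> hq q1 r1 hne hK.
have r0 : (0 < r)%N by lia.
rewrite /trace.
under eq_bigr => x _ do rewrite mulr_suml.
under eq_bigr => x _ do under eq_bigr => i _ do rewrite mulr_sumr.
rewrite exchange_big /=; apply: big1 => i _.
rewrite exchange_big /=; apply: big1 => j _.
under eq_bigr => x _ do rewrite !exprMn mulrACA -exprD.
rewrite -mulr_sumr.
case: (boolP (q ^ r + 1 %| q ^ i + q ^ j)%N) => h; last by rewrite (@D_zero K q r) ?mulr0.
have hSN := @SN K q r hq q1 r1 hne hK.
case: (@div_case q r i j q1 (ltn_ord i) (ltn_ord j) h) => E.
  rewrite E.
  have -> : (q ^ i + q ^ (i + r) = (q ^ r + 1) * q ^ i)%N by rewrite expnD mulnDl mul1n addnC mulnC.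
  under eq_bigr => x _ do rewrite exprM.
  by rewrite -frob_sum ?pnat_pow // hSN expr0n expn_eq0 (negPf (_ : q != 0%N)) ?mulr0 //; lia.
rewrite E.
have -> : (q ^ (j + r) + q ^ j = (q ^ r + 1) * q ^ j)%N by rewrite expnD mulnDl mul1n mulnC.
under eq_bigr => x _ do rewrite exprM.
by rewrite -frob_sum ?pnat_pow // hSN expr0n expn_eq0 (negPf (_ : q != 0%N)) ?mulr0 //; lia.
Qed.

Theorem theorem3p8 (p e r : nat) (K : finFieldType) :
  prime p -> (0 < e)%N -> (2 <= r)%N ->
  ((p ^ e)%N, r) <> (2%N, 2%N) ->
  #|K| = ((p ^ e) ^ (2 * r))%N ->
  self_orthogonal (p ^ e)%N (2 * r)%N (Dset K (p ^ e)%N r).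
Proof.
move=> pp e0 r1 hne hK u v [b [c [_ ->]]] [b' [c' [_ ->]]].
have pK : p \in [pchar K] by apply: (@card_finPcharP K p (e * (2 * r))); rewrite // expnM.
have hq : [pchar K].-nat (p ^ e)%N by rewrite (eq_pnat _ (pcharf_eq pK)) pnatX pnat_id.
have q1 : (1 < p ^ e)%N.
  have H : (p ^ 1 <= p ^ e)%N by exact: leq_pexp2l (prime_gt0 pp) e0.
  rewrite expn1 in H; exact: leq_trans (prime_gt1 pp) H.
have pq : (p %| p ^ e)%N by apply: dvdn_exp.
rewrite /innerD /codeword.
under eq_bigr => x _ do rewrite mulrDl !mulrDr.
rewrite !big_split /=.
rewrite (@Ctr K _ r b b') // -mulr_suml (@Btr K _ r b) ?mul0r //; last lia.
rewrite -mulr_sumr (@Btr K _ r b') ?mulr0 //; last lia.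
by rewrite sumr_const -mulr_natr (@Dcard K p _ r) // mulr0 !addr0.
Qed.
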